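(* There is an absolute constant $C$ such that for every $r\ge2$ and every graphic matroid $M$ of rank $r$ on ground set $[n]$ (for any $n$), $R^{lin}_{1/3}(rank_M)\le C r^2\log r$.
   Context: A graphic matroid $M(G)$ of a (multi)graph $G$ whose edges are identified with $[n]$ has as independent sets exactly the edge sets forming forests; its rank function is $rank_M(S)=\max\{|I|: I\subseteq S, I \text{ independent}\}$, viewed as a function on $\mathbb F_2^n$ by identifying $x$ with $\{i:x_i=1\}$; its rank is $rank_M([n])$. For $S\subseteq[n]$, $\chi_S(x)=\sum_{i\in S}x_i\pmod2$. Exact randomized $\mathbb F_2$-sketch complexity: for $f\colon\mathbb F_2^n\to\mathbb R$ and $\delta\in[0,1]$, $R^{lin}_\delta(f)$ is the smallest integer $k$ such that there exists a probability distribution over $k$-tuples of subsets $\mathbf S_1,\dots,\mathbf S_k\subseteq[n]$ and a function $g\colon\mathbb F_2^k\to\mathbb R$ with $\Pr_{\mathbf S_1,\dots,\mathbf S_k}[g(\chi_{\mathbf S_1}(x),\dots,\chi_{\mathbf S_k}(x))=f(x)]\ge1-\delta$ for every $x\in\mathbb F_2^n$. *)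

(* Defs.v *)
From mathcomp Require Import all_boot.
From Stdlib Require Import Reals.
Set Implicit Arguments. Unset Strict Implicit. Unset Printing Implicit Defensive.

(* A multigraph with vertex set 'I_V and edge set 'I_n; edge e has ends (ends e).
   Loops and parallel edges are allowed. *)
Definition joins (n V : nat) (ends : 'I_n -> 'I_V * 'I_V) (e : 'I_n) (a b : 'I_V) : bool :=
  (ends e == (a, b)) || (ends e == (b, a)).

(* S contains a cycle: k >= 1 distinct edges es_0..es_{k-1} of S and k distinct
   vertices vs_0..vs_{k-1} such that es_i joins vs_i and vs_{i+1 mod k}.
   (k = 1: a loop; k = 2: two parallel edges.) *)
Definition has_cycle (n V : nat) (ends : 'I_n -> 'I_V * 'I_V) (S : {set 'I_n}) : bool :=
  [exists k : 'I_n.+1, (0 < k) &&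
    [exists es : {ffun 'I_k -> 'I_n}, [exists vs : {ffun 'I_k -> 'I_V},
      [&& injectiveb es, injectiveb vs &
          [forall i : 'I_k, (es i \in S) && joins ends (es i) (vs i) (vs (ordS i))]]]]].

Definition forest (n V : nat) (ends : 'I_n -> 'I_V * 'I_V) (S : {set 'I_n}) : bool :=
  ~~ has_cycle ends S.

Definition grank (n V : nat) (ends : 'I_n -> 'I_V * 'I_V) (S : {set 'I_n}) : nat :=
  \max_(I : {set 'I_n} | (I \subset S) && forest ends I) #|I|.

(* F_2^n is {ffun 'I_n -> bool}; x is identified with {i | x_i = 1} *)
Definition vec_set (n : nat) (x : {ffun 'I_n -> bool}) : {set 'I_n} := [set i | x i].

Definition chi (n : nat) (S : {set 'I_n}) (x : {ffun 'I_n -> bool}) : bool :=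
  \big[addb/false]_(i in S) x i.

Definition sketch_vec (n k : nat) (Ss : {ffun 'I_k -> {set 'I_n}}) (x : {ffun 'I_n -> bool})
  : {ffun 'I_k -> bool} := [ffun j => chi (Ss j) x].

Definition sketchable (n : nat) (f : {ffun 'I_n -> bool} -> R) (delta : R) (k : nat) : Prop :=
  exists p : {ffun 'I_k -> {set 'I_n}} -> R,
    (forall Ss, (0 <= p Ss)%R) /\
    \big[Rplus/0%R]_(Ss : {ffun 'I_k -> {set 'I_n}}) p Ss = 1%R /\
    exists g : {ffun 'I_k -> bool} -> R,
      forall x : {ffun 'I_n -> bool},
        (1 - delta <=
          \big[Rplus/0%R]_(Ss : {ffun 'I_k -> {set 'I_n}})
             (if Req_EM_T (g (sketch_vec Ss x)) (f x) then p Ss else 0%R))%R.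

(* R^lin_delta(f) <= b  (R^lin is the least such k, so this is: some k <= b works) *)
Definition Rlin_le (n : nat) (f : {ffun 'I_n -> bool} -> R) (delta b : R) : Prop :=
  exists k : nat, (INR k <= b)%R /\ sketchable f delta k.

(* Main.v *)
Require Import Defs.
From mathcomp Require Import all_boot.
From Stdlib Require Import Reals Lra.
From mathcomp Require Import zify.
Set Implicit Arguments. Unset Strict Implicit. Unset Printing Implicit Defensive.

Section Rank.
Variables (n V : nat) (ends : 'I_n -> 'I_V * 'I_V).

Definition loop (e : 'I_n) := (ends e).1 == (ends e).2.

Lemma forest_sub (I J : {set 'I_n}) : I \subset J -> forest ends J -> forest ends I.
Proof.
move=> sIJ; apply: contra => /existsP[k /andP[k0 /existsP[es /existsP[vs /and3P[ie iv /forallP H]]]]].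
apply/existsP; exists k; rewrite k0 /=; apply/existsP; exists es; apply/existsP; exists vs.
rewrite ie iv /=; apply/forallP => i; have /andP[h1 h2] := H i.
by rewrite h2 (subsetP sIJ _ h1).
Qed.

Lemma forest0 : forest ends set0.
Proof.
apply/negP => /existsP[k /andP[k0 /existsP[es /existsP[vs /and3P[_ _ /forallP H]]]]].
by have := H (Ordinal k0); rewrite inE.
Qed.

Lemma grank_ge (I S : {set 'I_n}) : I \subset S -> forest ends I -> #|I| <= grank ends S.
Proof. by move=> h1 h2; rewrite /grank (bigD1 I) /= ?h1 ?h2 ?leq_maxl. Qed.

Lemma grank_max (S : {set 'I_n}) : exists I : {set 'I_n}, [/\ I \subset S, forest ends I & #|I| = grank ends S].
Proof.
rewrite /grank (bigmax_eq_arg set0); last by rewrite sub0set forest0.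
case: arg_maxnP; first by rewrite sub0set forest0.
by move=> I /andP[h1 h2] _; exists I.
Qed.

Lemma grank_mono (S T : {set 'I_n}) : S \subset T -> grank ends S <= grank ends T.
Proof.
move=> sST; have [I [h1 h2 <-]] := grank_max S; apply: grank_ge => //.
exact: subset_trans sST.
Qed.

Lemma forest_noloop (I : {set 'I_n}) e : forest ends I -> e \in I -> ~~ loop e.
Proof.
move=> fI eI; apply/negP => le; move/negP: fI; apply; apply/existsP.
have h1 : 1 < n.+1 by case: n e {eI le} => [[]|].
exists (Ordinal h1) => /=; apply/existsP; exists [ffun _ => e]; apply/existsP.
exists [ffun _ => (ends e).1]; apply/and3P; split.
- by apply/injectiveP => i j _; apply: val_inj; case: i j => [[]//] ? [[]//].
- by apply/injectiveP => i j _; apply: val_inj; case: i j => [[]//] ? [[]//].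
apply/forallP => i; rewrite !ffunE eI /= /joins; move/eqP: le.
by case: (ends e) => a b /= ->; rewrite eqxx.
Qed.

Lemma forest_nopar (I : {set 'I_n}) e1 e2 : forest ends I -> e1 \in I -> e2 \in I ->
  ends e1 = ends e2 -> e1 = e2.
Proof.
move=> fI i1 i2 he; apply/eqP; apply/negPn/negP => ne.
have nl := forest_noloop fI i1.
move/negP: fI; apply; apply/existsP.
have h2 : 2 < n.+1.
  case: n e1 e2 {i1 i2 he nl} ne => [[]//|[|]//] [[]//] ? [[]//] ?.
exists (Ordinal h2) => /=; apply/existsP.
exists [ffun i : 'I_2 => if val i == 0 then e1 else e2]; apply/existsP.
exists [ffun i : 'I_2 => if val i == 0 then (ends e1).1 else (ends e1).2]; apply/and3P; split.
- apply/injectiveP => i j; rewrite !ffunE; apply: contra_eq => nij.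
  case: i j nij => [[|[|]]//] ? [[|[|]]//] ? //= _; by [rewrite eq_sym|].
- apply/injectiveP => i j; rewrite !ffunE; apply: contra_eq => nij.
  case: i j nij => [[|[|]]//] ? [[|[|]]//] ? //= _; by [rewrite eq_sym|].
apply/forallP => -[[|[|]]//] ? ; rewrite !ffunE /= ?i1 ?i2 /joins /=;
  rewrite -?he; case: (ends e1) => a b; rewrite ?eqxx ?orbT //.
Qed.


Lemma forest_map (I : {set 'I_n}) (rho : 'I_n -> 'I_n) :
  {in I, forall e, ends (rho e) = ends e} -> forest ends I -> forest ends (rho @: I).
Proof.
move=> hr fI; apply/negP => /existsP[k /andP[k0 /existsP[es /existsP[vs /and3P[ie iv /forallP H]]]]].
move/negP: fI; apply; apply/existsP; exists k; rewrite k0 /=.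
have pre : forall i, exists2 e, e \in I & rho e = es i.
  by move=> i; have /andP[/imsetP[e eI ->] _] := H i; exists e.
pose es' := [ffun i => odflt (es i) [pick e in I | rho e == es i]].
have hes : forall i, es' i \in I /\ rho (es' i) = es i.
  move=> i; rewrite /es' ffunE; case: pickP => [e /andP[eI /eqP re]|h] //=.
  by have [e eI re] := pre i; move: (h e); rewrite eI re eqxx.
apply/existsP; exists es'; apply/existsP; exists vs; rewrite iv /=; apply/andP; split.
  apply/injectiveP => i j eij; apply: (injectiveP _ ie).
  by have [_ <-] := hes i; have [_ <-] := hes j; rewrite eij.
apply/forallP => i; have [h1 h2] := hes i; rewrite h1 /=.
have /andP[_] := H i; rewrite /joins -h2 hr //.
Qed.

Lemma grank_par (S T : {set 'I_n}) : S \subset T ->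
  (forall e, e \in T -> e \notin S -> loop e \/ exists2 e', e' \in S & ends e' = ends e) ->
  grank ends T = grank ends S.
Proof.
move=> sST hp; apply/eqP; rewrite eqn_leq (grank_mono sST) andbT.
have [I [sIT fI <-]] := grank_max T.
pose rho e := if e \in S then e else odflt e [pick e' in S | ends e' == ends e].
have hr : {in I, forall e, rho e \in S /\ ends (rho e) = ends e}.
  move=> e eI; rewrite /rho; case: ifP => // eS.
  case: (hp e (subsetP sIT _ eI)); first by rewrite eS.
    by move=> le; move: (forest_noloop fI eI); rewrite le.
  move=> [e' e'S he']; case: pickP => [e2 /andP[h1 /eqP h2]|h] //=.
  by move: (h e'); rewrite e'S he' eqxx.
have inj : {in I &, injective rho}.
  move=> e1 e2 i1 i2 he; apply: (forest_nopar fI i1 i2).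
  by have [_ <-] := hr e1 i1; have [_ <-] := hr e2 i2; rewrite he.
rewrite -(card_in_imset inj). apply: grank_ge.
  by apply/subsetP => _ /imsetP[e eI ->]; have [] := hr e eI.
by apply: forest_map => // e eI; have [] := hr e eI.
Qed.


Definition NL : {set 'I_n} := [set e | ~~ loop e].
Definition Dset : {set 'I_V * 'I_V} := ends @: NL.
Definition Wset (F : {set 'I_n}) : {set 'I_V} := \bigcup_(f in F) [set (ends f).1; (ends f).2].

Lemma joinsE e a b : joins ends e a b -> ends e = (a, b) \/ ends e = (b, a).
Proof. by case/orP => /eqP ->; [left|right]. Qed.

Lemma endsW (F : {set 'I_n}) f : f \in F -> (ends f).1 \in Wset F /\ (ends f).2 \in Wset F.
Proof. by move=> fF; split; apply/bigcupP; exists f; rewrite // !inE eqxx ?orbT. Qed.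

Lemma nl_endpoints (F : {set 'I_n}) e : forest ends F -> #|F| = grank ends [set: 'I_n] -> ~~ loop e ->
  (ends e).1 \in Wset F /\ (ends e).2 \in Wset F.
Proof.
move=> fF cF nle; case: (boolP (e \in F)) => eF; first exact: endsW.
have : ~~ forest ends (e |: F).
  apply/negP => f2; have := grank_ge (subsetT (e |: F)) f2.
  by rewrite cardsU1 eF -cF ltnn.
rewrite negbK => /existsP[k /andP[k0 /existsP[es /existsP[vs /and3P[ie iv /forallP H]]]]].
have key : forall j, es j != e -> vs j \in Wset F /\ vs (ordS j) \in Wset F.
  move=> j nj; have /andP[hj1 hj2] := H j; have hj := joinsE hj2.
  case/setU1P: hj1 => [ej|jF]; first by rewrite ej eqxx in nj.
  by have := endsW jF; case: hj => -> /= [? ?]; split.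
have [i ei] : exists i, es i = e.
  case: (pickP (fun i => es i == e)) => [i /eqP ei | hn]; first by exists i.
  move/negP: fF; case; apply/existsP.
  exists k; rewrite k0 /=; apply/existsP; exists es; apply/existsP; exists vs.
  rewrite ie iv /=; apply/forallP => j; have /andP[/setU1P[ej|jF] ->] := H j; rewrite ?andbT //.
  by move: (hn j); rewrite ej eqxx.
have /andP[_ hi2] := H i; have hi := joinsE hi2; rewrite ei in hi.
have nv : vs i != vs (ordS i).
  by apply/negP => /eqP hv; move: nle; rewrite /loop; case: hi => ->; rewrite hv eqxx.
have ni : ordS i != i by apply: contraNneq nv => ->.
have n2 : es (ordS i) != e by rewrite -ei (inj_eq (injectiveP _ ie)).
have W2 : vs (ordS i) \in Wset F by have [] := key _ n2.
have np : es (ord_pred i) != e.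
  rewrite -ei (inj_eq (injectiveP _ ie)); apply: contraNneq ni => hp.
  by rewrite -{1}hp ord_predK.
have W1 : vs i \in Wset F by have [_] := key _ np; rewrite ord_predK.
by case: hi => ->.
Qed.


Lemma card_bigcup_le (I T : finType) (A : {pred I}) (B : I -> {set T}) :
  #|\bigcup_(i in A) B i| <= \sum_(i in A) #|B i|.
Proof.
elim/big_rec2: _ => [|i X s _ h]; first by rewrite cards0.
by rewrite cardsU; apply: leq_trans (leq_subr _ _) _; rewrite leq_add2l.
Qed.

Lemma cardD : #|Dset| <= 4 * grank ends [set: 'I_n] * grank ends [set: 'I_n].
Proof.
have [F [_ fF cF]] := grank_max [set: 'I_n].
have cW : #|Wset F| <= 2 * grank ends [set: 'I_n].
  apply: leq_trans (card_bigcup_le _ _) _; rewrite -cF.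
  apply: leq_trans (_ : \sum_(f in F) 2 <= _).
    by apply: leq_sum => f _; rewrite cards2; case: (_ != _).
  by rewrite sum_nat_const mulnC.
have sD : Dset \subset setX (Wset F) (Wset F).
  apply/subsetP => d /imsetP[e]; rewrite inE => nle ->.
  have [h1 h2] := nl_endpoints fF cF nle.
  by rewrite inE /= h1 h2.
apply: leq_trans (subset_leq_card sD) _; rewrite cardsX.
by apply: leq_trans (leq_mul cW cW) _; rewrite mulnACA mulnA.
Qed.

End Rank.
Lemma chi_D1 n (A : {set 'I_n}) (x : {ffun 'I_n -> bool}) i : i \in A -> chi A x = x i (+) chi (A :\ i) x.
Proof.
move=> iA; rewrite /chi (bigD1 i) //=; congr addb; apply: eq_bigl => j.
by rewrite !inE andbC.
Qed.

Lemma chi_true n (A : {set 'I_n}) (x : {ffun 'I_n -> bool}) : chi A x -> exists2 i, i \in A & x i.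
Proof.
case: (pickP (fun i => (i \in A) && x i)) => [i /andP[h1 h2] | h]; first by exists i.
by rewrite /chi big1 // => i iA; move: (h i); rewrite iA.
Qed.

Lemma card_sets_n n : #|{set 'I_n}| = expn 2 n.
Proof.
have -> : #|{set 'I_n}| = #|powerset [set: 'I_n]|.
  by apply: eq_card => S; rewrite !inE subsetT.
by rewrite card_powerset cardsT card_ord.
Qed.

Lemma half_card n (P : {set 'I_n}) (x : {ffun 'I_n -> bool}) e0 : e0 \in P -> x e0 ->
  2 * #|[set S : {set 'I_n} | ~~ chi (S :&: P) x]| = expn 2 n.
Proof.
move=> e0P xe0.
pose tau (S : {set 'I_n}) := if e0 \in S then S :\ e0 else e0 |: S.
have tauK : involutive tau.
  move=> S; rewrite /tau; case: (boolP (e0 \in S)) => eS.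
    by rewrite in_setD1 eqxx /= setD1K.
  by rewrite setU11 setU1K.
have tauC : forall S, chi (tau S :&: P) x = ~~ chi (S :&: P) x.
  move=> S; rewrite /tau; case: ifP => eS.
    have -> : (S :\ e0) :&: P = (S :&: P) :\ e0.
      by apply/setP => j; rewrite !inE; case: (j == e0); rewrite ?andbF.
    have h : e0 \in S :&: P by rewrite inE eS e0P.
    by rewrite (chi_D1 x h) xe0 /= negbK.
  have -> : (e0 |: S) :&: P = e0 |: (S :&: P).
    apply/setP => j; rewrite !inE; case: eqP => [->|] //=; by rewrite e0P.
  rewrite (chi_D1 x (setU11 e0 (S :&: P))) xe0 setU1K //.
  by rewrite inE eS.
have tinj : injective tau := inv_inj tauK.
set A0 := [set S | ~~ _]; set A1 := [set S : {set 'I_n} | chi (S :&: P) x].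
have s1 : tau @: A1 \subset A0.
  by apply/subsetP => T /imsetP[S]; rewrite !inE => h ->; rewrite tauC h.
have s0 : tau @: A0 \subset A1.
  by apply/subsetP => T /imsetP[S]; rewrite !inE => h ->; rewrite tauC h.
have e01 : #|A0| = #|A1|.
  apply/eqP; rewrite eqn_leq -{1}(card_imset _ tinj) (subset_leq_card s0).
  by rewrite -(card_imset _ tinj) (subset_leq_card s1).
have eA : A0 = ~: A1 by apply/setP => S; rewrite !inE.
rewrite eA in e01 *.
by rewrite -card_sets_n -(cardsC A1) mul2n -addnn {1}e01.
Qed.
Lemma Rsum_INR (I : finType) (F : I -> nat) :
  \big[Rplus/0%R]_(i : I) INR (F i) = INR (\sum_(i : I) F i).
Proof. by rewrite (big_morph INR plus_INR (erefl (INR 0))). Qed.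

Lemma Rsum_le (I : finType) (F G : I -> R) : (forall i, (F i <= G i)%R) ->
  (\big[Rplus/0%R]_(i : I) F i <= \big[Rplus/0%R]_(i : I) G i)%R.
Proof.
move=> h; apply: (big_ind2 (fun a b => (a <= b)%R)) => //; first exact: Rle_refl.
by move=> *; apply: Rplus_le_compat.
Qed.

Lemma Rsum_div (I : finType) (F : I -> R) c :
  \big[Rplus/0%R]_(i : I) (F i / c)%R = (\big[Rplus/0%R]_(i : I) F i / c)%R.
Proof.
apply/esym; apply: (big_morph (fun y => y / c)%R) => [a b|]; rewrite /Rdiv ?Rmult_plus_distr_r //.
by rewrite Rmult_0_l.
Qed.

Lemma sum_b2n (I : finType) (P : pred I) : \sum_(i : I) (P i : nat) = #|P|.
Proof. by rewrite -sum1_card [RHS]big_mkcond; apply: eq_bigr => i _; rewrite unfold_in; case: (P i). Qed.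

Lemma fiber_sum (A B : finType) (phi : A -> B) (Q : pred B) :
  \sum_(b : B) (if Q b then #|[set a | phi a == b]| else 0) = #|[set a | Q (phi a)]|.
Proof.
have -> : \sum_(b : B) (if Q b then #|[set a | phi a == b]| else 0) =
          \sum_(b : B) \sum_(a : A) ((phi a == b) && Q b : nat).
  apply: eq_bigr => b _; rewrite (sum_b2n (fun a => (phi a == b) && Q b)).
  case: (Q b).
    by apply: eq_card => a; rewrite !inE unfold_in /= andbT.
  by apply/esym; apply: eq_card0 => a; rewrite unfold_in /= andbF.
rewrite (_ : #|[set a | Q (phi a)]| = \sum_(a : A) (Q (phi a) : nat)); last first.
  by rewrite (sum_b2n (fun a => Q (phi a))); apply: eq_card => a; rewrite inE.
rewrite exchange_big /=.
apply: eq_bigr => a _; rewrite (bigD1 (phi a)) //= eqxx /= big1 ?addn0 // => b nb.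
by rewrite eq_sym (negbTE nb).
Qed.

Lemma card_prod_sets k (T : finType) (F : 'I_k -> {set T}) :
  #|[set Ts : {ffun 'I_k -> T} | [forall j, Ts j \in F j]]| = \prod_(j < k) #|F j|.
Proof.
have := card_family (fun j : 'I_k => mem (F j)).
rewrite foldrE big_map big_enum /= => <-.
apply: eq_card => Ts; rewrite inE; apply/forallP/familyP => h j; exact: h.
Qed.

Section Sketch.
Variables (n V : nat) (ends : 'I_n -> 'I_V * 'I_V) (t : nat).

Definition mD := #|Dset ends|.
Definition km := mD * t.
Definition dj (j : 'I_km) : option ('I_V * 'I_V) :=
  nth None [seq Some d | d <- enum (Dset ends)] (j %/ t).
Definition Pj j : {set 'I_n} := [set e | Some (ends e) == dj j].
Definition phi (Ts : {ffun 'I_km -> {set 'I_n}}) : {ffun 'I_km -> {set 'I_n}} :=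
  [ffun j => Ts j :&: Pj j].
Definition NN := #|{ffun 'I_km -> {set 'I_n}}|.
Definition pr (Ss : {ffun 'I_km -> {set 'I_n}}) : R :=
  (INR #|[set Ts | phi Ts == Ss]| / INR NN)%R.
Definition gs (b : {ffun 'I_km -> bool}) : R :=
  INR (grank ends [set e | [exists j, b j && (dj j == Some (ends e))]]).
Definition good (x : {ffun 'I_n -> bool}) (Ss : {ffun 'I_km -> {set 'I_n}}) :=
  [forall d in Dset ends, [exists e, x e && (ends e == d)] ==>
     [exists j, (dj j == Some d) && chi (Ss j) x]].

Lemma dj_D j d : dj j = Some d -> d \in Dset ends.
Proof.
rewrite /dj; case: (ltnP (j %/ t) (size (enum (Dset ends)))) => hl.
  by rewrite (nth_map d) // => -[<-]; rewrite -mem_enum mem_nth.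
by rewrite nth_default ?size_map.
Qed.

Lemma good_correct x (Ss : {ffun 'I_km -> {set 'I_n}}) : (forall j, Ss j \subset Pj j) -> good x Ss ->
  gs (sketch_vec Ss x) = INR (grank ends (vec_set x)).
Proof.
move=> hsub hg; rewrite /gs; congr INR.
set E := [set e | _].
have hE : forall e, (e \in E) = (ends e \in Dset ends) && [exists e', x e' && (ends e' == ends e)].
  move=> e; rewrite inE; apply/existsP/andP.
    case=> j /andP[]; rewrite ffunE => hc /eqP hd; split; first exact: dj_D hd.
    have [e' e'S xe'] := chi_true hc.
    have := subsetP (hsub j) _ e'S; rewrite inE hd => /eqP [he].
    by apply/existsP; exists e'; rewrite xe' he eqxx.
  case=> hD hx; have := (forallP hg) (ends e); rewrite hD hx /=.
  by case/existsP => j /andP[/eqP hj hc]; exists j; rewrite ffunE hc hj eqxx.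
have e1 : grank ends (vec_set x :|: E) = grank ends (vec_set x).
  apply: grank_par; first exact: subsetUl.
  move=> e; rewrite inE => /orP[h|h] hn; first by rewrite h in hn.
  right; move: h; rewrite hE => /andP[_ /existsP[e' /andP[xe' /eqP he]]].
  by exists e' => //; rewrite inE.
have e2 : grank ends (vec_set x :|: E) = grank ends E.
  apply: grank_par; first exact: subsetUr.
  move=> e; rewrite inE => /orP[xe|h] hn; last by rewrite h in hn.
  case: (boolP (loop ends e)) => le; first by left.
  move: hn; rewrite hE; have -> : ends e \in Dset ends by apply/imsetP; exists e; rewrite ?inE.
  by rewrite /=; case/existsP; exists e; move: xe; rewrite inE => ->; rewrite eqxx.
by rewrite -e2 e1.
Qed.

Lemma J_big d : d \in Dset ends -> t <= #|[set j | dj j == Some d]|.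
Proof.
move=> dD.
have hi : index d (enum (Dset ends)) < mD by rewrite /mD cardE index_mem mem_enum.
have hlt : forall u : 'I_t, index d (enum (Dset ends)) * t + u < km.
  move=> u; rewrite /km; apply: leq_trans (_ : (index d (enum (Dset ends))).+1 * t <= mD * t).
    by rewrite mulSn; have := ltn_ord u; lia.
  by rewrite leq_mul2r hi orbT.
pose f u := Ordinal (hlt u).
have finj : injective f.
  by move=> u v /(congr1 val) /= /addnI h; exact: val_inj.
rewrite -{1}(card_ord t) -cardsT -(card_imset _ finj); apply: subset_leq_card.
apply/subsetP => j /imsetP[u _ ->]; rewrite inE /dj /=.
have t0 : 0 < t by apply: leq_ltn_trans (ltn_ord u).
rewrite divnMDl // divn_small ?addn0 ?ltn_ord // (nth_map d) ?nth_index ?mem_enum //.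
by rewrite -cardE.
Qed.

Lemma NN_eq : NN = \prod_(j < km) expn 2 n.
Proof. by rewrite /NN card_ffun card_sets_n prod_nat_const card_ord. Qed.

Lemma Bd_bound (x : {ffun 'I_n -> bool}) d e0 : d \in Dset ends -> x e0 -> ends e0 = d ->
  expn 2 t * #|[set Ts : {ffun 'I_km -> {set 'I_n}} |
     [forall j, (dj j == Some d) ==> ~~ chi (Ts j :&: Pj j) x]]| <= NN.
Proof.
move=> dD xe0 he0.
set J := [set j | dj j == Some d].
pose F j : {set {set 'I_n}} := if j \in J then [set S : {set 'I_n} | ~~ chi (S :&: Pj j) x] else setT.
have -> : [set Ts : {ffun 'I_km -> {set 'I_n}} |
     [forall j, (dj j == Some d) ==> ~~ chi (Ts j :&: Pj j) x]] =
     [set Ts : {ffun 'I_km -> {set 'I_n}} | [forall j, Ts j \in F j]].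
  apply/setP => Ts; rewrite !inE; apply: eq_forallb => j.
  by rewrite /F inE; case: (dj j == Some d); rewrite !inE.
rewrite card_prod_sets.
have hF : forall j, j \in J -> 2 * #|F j| = expn 2 n.
  move=> j jJ; rewrite /F jJ; apply: (half_card (e0 := e0)) => //.
  by move: jJ; rewrite !inE he0 eq_sym.
apply: leq_trans (leq_mul (leq_pexp2l (isT : 0 < 2) (J_big dD)) (leqnn _)) _.
rewrite -prod_nat_const big_mkcond /= -big_split /= NN_eq leq_eqVlt; apply/orP; left.
apply/eqP; apply: eq_bigr => j _; case: ifP => jJ; first exact: hF.
by rewrite /F jJ mul1n cardsT card_sets_n.
Qed.

Lemma bad_bound (x : {ffun 'I_n -> bool}) : 3 * mD <= expn 2 t ->
  3 * #|[set Ts | ~~ good x (phi Ts)]| <= NN.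
Proof.
move=> h3.
set Dx := [set d in Dset ends | [exists e, x e && (ends e == d)]].
pose B d := [set Ts : {ffun 'I_km -> {set 'I_n}} |
     [forall j, (dj j == Some d) ==> ~~ chi (Ts j :&: Pj j) x]].
have sub : [set Ts | ~~ good x (phi Ts)] \subset \bigcup_(d in Dx) B d.
  apply/subsetP => Ts; rewrite inE negb_forall => /existsP[d].
  rewrite negb_imply => /andP[dD]; rewrite negb_imply => /andP[hx hn].
  apply/bigcupP; exists d; first by rewrite inE dD hx.
  rewrite inE; apply/forallP => j; apply/implyP => hj; apply: contra hn => hc.
  by apply/existsP; exists j; rewrite hj /phi ffunE hc.
have hB : forall d, d \in Dx -> expn 2 t * #|B d| <= NN.
  move=> d; rewrite inE => /andP[dD /existsP[e0 /andP[xe0 /eqP he0]]].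
  exact: Bd_bound dD xe0 he0.
have hDx : #|Dx| <= mD by apply: subset_leq_card; apply/subsetP => d; rewrite inE => /andP[].
rewrite -(leq_pmul2l (expn_gt0 2 t)) mulnCA.
apply: leq_trans (_ : 3 * (#|Dx| * NN) <= _); last first.
  by rewrite mulnA; apply: leq_mul => //; apply: leq_trans h3; rewrite leq_mul2l hDx orbT.
rewrite leq_mul2l; apply/orP; right.
apply: leq_trans (_ : expn 2 t * \sum_(d in Dx) #|B d| <= _).
  by rewrite leq_mul2l (leq_trans (subset_leq_card sub) (card_bigcup_le _ _)) orbT.
rewrite big_distrr /= -sum_nat_const; apply: leq_sum => d dD; exact: hB.
Qed.


Lemma sketch_ok : 3 * mD <= expn 2 t ->
  sketchable (fun x : {ffun 'I_n -> bool} => INR (grank ends (vec_set x))) (1/3)%R km.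
Proof.
move=> h3.
have NNe : NN = expn (expn 2 n) km by rewrite /NN card_ffun card_sets_n card_ord.
have NN0 : (0 < INR NN)%R by apply: lt_0_INR; apply/ltP; rewrite NNe !expn_gt0.
exists pr; split.
  move=> Ss; rewrite /pr /Rdiv; apply: Rmult_le_pos; first exact: pos_INR.
  by left; apply: Rinv_0_lt_compat.
split.
  rewrite /pr Rsum_div Rsum_INR.
  have := fiber_sum phi (fun _ => true) => /= ->.
  rewrite (_ : #|_| = NN); last by apply: eq_card => Ts; rewrite inE.
  by rewrite /Rdiv Rinv_r //; apply: Rgt_not_eq.
exists gs => x.
set G := #|[set Ts | good x (phi Ts)]|.
apply: (@Rle_trans _ (INR G / INR NN)%R).
  have hn : 2 * NN <= 3 * G.
    have hb := bad_bound x h3.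
    have hc := cardsC [set Ts | good x (phi Ts)].
    have ec : ~: [set Ts | good x (phi Ts)] = [set Ts | ~~ good x (phi Ts)].
      by apply/setP => Ts; rewrite !inE.
    rewrite ec in hc.
    have hc2 : G + #|[set Ts | ~~ good x (phi Ts)]| = NN := hc.
    move: hc2 hb; lia.
  have := le_INR _ _ (elimT leP hn); rewrite !mult_INR => hr.
  have e2 : INR 2 = 2%R by simpl; lra.
  have e3 : INR 3 = 3%R by simpl; lra.
  rewrite e2 e3 in hr.
  apply: (Rmult_le_reg_r (INR NN)) => //.
  rewrite /Rdiv Rmult_assoc Rinv_l; last by apply: Rgt_not_eq.
  lra.
rewrite (_ : G = \sum_(Ss : {ffun 'I_km -> {set 'I_n}})
   (if good x Ss && [forall j, Ss j \subset Pj j] then #|[set Ts | phi Ts == Ss]| else 0)); last first.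
  rewrite (fiber_sum phi (fun Ss => good x Ss && [forall j, Ss j \subset Pj j])).
  apply: eq_card => Ts; rewrite !inE.
  have -> : [forall j, phi Ts j \subset Pj j] by apply/forallP => j; rewrite ffunE subsetIr.
  by rewrite andbT.
rewrite -Rsum_INR -Rsum_div; apply: Rsum_le => Ss.
case h : (good x Ss && [forall j, Ss j \subset Pj j]).
  move/andP: h => [hg /forallP hs].
  have he := good_correct hs hg.
  by case: Req_dec_T => [hq|hne] /=; [exact: Rle_refl | case: hne].
rewrite /= /Rdiv Rmult_0_l.
case: Req_dec_T => [hq|hne] /=; last exact: Rle_refl.
rewrite /pr /Rdiv; apply: Rmult_le_pos; first exact: pos_INR.
by left; apply: Rinv_0_lt_compat.
Qed.

End Sketch.

Lemma INR_expn2 L : INR (expn 2 L) = (2 ^ L)%R.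
Proof.
elim: L => [|L IH]; first by rewrite expn0.
by rewrite expnS mult_INR IH /=; rewrite Rmult_comm; simpl; lra.
Qed.

Lemma ln2_ge : (1/2 <= ln 2)%R.
Proof.
have hy : (exp (1/2) * exp (1/2) <= 3)%R.
  rewrite -exp_plus (_ : (1/2 + 1/2 = 1)%R); [exact: exp_le_3 | lra].
have hp := exp_pos (1/2).
have h2 : (exp (1/2) < 2)%R by nra.
rewrite -{1}(ln_exp (1/2)); left; apply: ln_increasing => //.
Qed.

Lemma pow_eq L : expn 2 (7 * L + 4) = 16 * (expn 2 L * expn 2 L *
   (expn 2 L * expn 2 L * expn 2 L * expn 2 L * expn 2 L)).
Proof.
rewrite expnD (mulnC 7 L) expnM !expnS expn0 !muln1.
move: (expn 2 L) => b. rewrite -!multE. ring.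
Qed.

Theorem mainTheorem5 :
  exists C : R,
    forall (n V : nat) (ends : 'I_n -> 'I_V * 'I_V),
      let r := grank ends [set: 'I_n] in
      (2 <= r)%N ->
      Rlin_le (fun x : {ffun 'I_n -> bool} => INR (grank ends (vec_set x))) (1/3)%R
              (C * (INR r) ^ 2 * ln (INR r))%R.
Proof.
exists 88%R => n V ends r hr.
set L := trunc_log 2 r.
have hL1 : 1 <= L by apply: trunc_log_max.
have hLr : expn 2 L <= r by apply: trunc_logP => //; apply: leq_trans hr.
have hrL : r < expn 2 L.+1 by apply: trunc_log_ltn.
have hm : mD ends <= 4 * r * r := cardD ends.
exists (km ends (7 * L + 4)); split; last first.
  apply: sketch_ok.
  set a := expn 2 L.
  have ha : 2 <= a by rewrite /a -(expn1 2) leq_pexp2l.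
  have hra : r <= 2 * a by move: hrL; rewrite expnS => /ltnW.
  rewrite pow_eq -/a.
  have h5 : 32 <= a * a * a * a * a.
    by apply: (@leq_trans (2*2*2*2*2)) => //; repeat apply: leq_mul.
  have rr : r * r <= 2 * a * (2 * a) by apply: leq_mul.
  have hq : (a * a) * 32 <= a * a * (a * a * a * a * a) by rewrite leq_mul2l h5 orbT.
  move: hq rr hm; set P := a * a * a * a * a; set Q := a * a; set RR := r * r.
  have -> : 2 * a * (2 * a) = 4 * Q by rewrite /Q; rewrite -!multE; ring.
  rewrite /mD => *; lia.
have hkm : km ends (7 * L + 4) <= 44 * (r * r) * L.
  rewrite /km; apply: leq_trans (leq_mul hm (_ : 7 * L + 4 <= 11 * L)) _; first lia.
  lia.
have hR : (INR (km ends (7 * L + 4)) <= 44 * (INR r * INR r) * INR L)%R.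
  have := le_INR _ _ (elimT leP hkm); rewrite !mult_INR.
  by rewrite (_ : INR 44 = 44%R) //; simpl; lra.
have hr0 : (0 < INR r)%R by apply: lt_0_INR; apply/ltP; apply: leq_trans hr.
have hlnL : (INR L <= 2 * ln (INR r))%R.
  have e : (ln (2 ^ L) <= ln (INR r))%R.
    rewrite -INR_expn2; have := le_INR _ _ (elimT leP hLr) => h.
    case: (Rle_lt_or_eq_dec _ _ h) => [hl|->]; last exact: Rle_refl.
    left; apply: ln_increasing => //; rewrite INR_expn2; apply: pow_lt; lra.
  rewrite ln_pow in e; last by lra.
  have := ln2_ge; have := pos_INR L; nra.
have hr2 : (0 <= INR r * INR r)%R by nra.
apply: Rle_trans hR _.
rewrite (_ : (88 * INR r ^ 2 * ln (INR r) = 44 * (INR r * INR r) * (2 * ln (INR r)))%R); last by simpl; ring.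
apply: Rmult_le_compat_l => //; nra.
Qed.
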